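(* Let $\Delta'$, $\Delta''$ be edges (1-cells) of $\tilde K_b(\mathcal P,w)$. Then $\Delta'$ and $\Delta''$ are simple square equivalent if and only if either there is a maximal shaded transistor $T$ of $\Delta'$ such that $\Delta''$ is obtained from $\Delta'$ by removing $T$ and all of its bottom wires, or the same holds with the roles of $\Delta'$ and $\Delta''$ exchanged.
   Context: $\mathcal P=\langle\Sigma\mid\mathcal R\rangle$ is a semigroup presentation (no relation $(u,u)$), $w\in\Sigma^+$. Pictures over $\mathcal P$: frame, transistors and $\Sigma$-labelled wires, each wire from the bottom of a transistor or top of the frame to the top of a transistor or bottom of the frame, contacts ordered left to right, ''$T_1<T_2$ if a wire runs from the bottom of $T_1$ to the top of $T_2$'' generating a strict partial order, and each transistor's top/bottom words forming a relation of $\mathcal R$. Reduced: no dipole (pair $T_1<T_2$ with bottom contacts of $T_1$ joined in order to top contacts of $T_2$ and top label of $T_1$ = bottom label of $T_2$). $\tilde K_b(\mathcal P,w)$: vertices are reduced $(w,* )$-pictures modulo concatenation below by transistor-free pictures; an $n$-cube is such a picture with $n$ maximal transistors marked white (the other transistors are called shaded), its vertices obtained by keeping or deleting each white transistor together with its bottom wires; cubes glued along faces with equal labels. Thus an edge is a picture with exactly one white transistor. Two edges are simple square equivalent if they are opposite sides of a square (2-cube). *)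

(* Defs.v *)
From Stdlib Require Import Relations.Relation_Operators.
From mathcomp Require Import all_boot.
Set Implicit Arguments. Unset Strict Implicit. Unset Printing Implicit Defensive.

(** Contacts are encoded as pairs [(option nat * nat)]:
    - a wire SOURCE is [(None, i)] = i-th contact (from the left) on the top
      of the frame, or [(Some t, j)] = j-th bottom contact of transistor t;
    - a wire TARGET is [(Some t, k)] = k-th top contact of transistor t,
      or [(None, i)] = i-th contact on the bottom of the frame.
    Since every contact carries exactly one wire, a wire is identified with
    its source, and the wiring is a function [wire : source -> target]. *)
Definition contact := (option nat * nat)%type.

Record pic (S : Type) := Pic {
  nT   : nat;
  ttop : nat -> seq S;
  tbot : nat -> seq S;
  vbot : seq S;             (* bottom label of the frame *)
  wire : contact -> contact
}.

Section Pictures.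
Variable S : Type.
Variable R : seq S -> seq S -> Prop.
Variable w : seq S.                    (* top label of the frame *)

Definition valid_src (P : pic S) (s : contact) : Prop :=
  match s with
  | (None, i) => i < size w
  | (Some t, j) => t < nT P /\ j < size (tbot P t)
  end.

Definition valid_tgt (P : pic S) (s : contact) : Prop :=
  match s with
  | (None, i) => i < size (vbot P)
  | (Some t, k) => t < nT P /\ k < size (ttop P t)
  end.

Definition lab_src (P : pic S) (s : contact) : option S :=
  match s with
  | (None, i) => onth w i
  | (Some t, j) => onth (tbot P t) j
  end.

Definition lab_tgt (P : pic S) (s : contact) : option S :=
  match s with
  | (None, i) => onth (vbot P) i
  | (Some t, k) => onth (ttop P t) k
  end.

Definition tlt (P : pic S) (t1 t2 : nat) : Prop :=
  t1 < nT P /\ t2 < nT P /\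
  exists j k, j < size (tbot P t1) /\ wire P (Some t1, j) = (Some t2, k).

Definition is_picture (P : pic S) : Prop :=
  (forall s, valid_src P s -> valid_tgt P (wire P s)) /\
  (forall s1 s2, valid_src P s1 -> valid_src P s2 ->
     wire P s1 = wire P s2 -> s1 = s2) /\
  (forall c, valid_tgt P c -> exists s, valid_src P s /\ wire P s = c) /\
  (forall s, valid_src P s -> lab_src P s = lab_tgt P (wire P s)) /\
  (forall t, t < nT P -> R (ttop P t) (tbot P t) \/ R (tbot P t) (ttop P t)) /\
  (forall t, ~ clos_trans nat (tlt P) t t).

Definition dipole (P : pic S) (t1 t2 : nat) : Prop :=
  tlt P t1 t2 /\
  size (tbot P t1) = size (ttop P t2) /\
  (forall j, j < size (tbot P t1) -> wire P (Some t1, j) = (Some t2, j)) /\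
  ttop P t1 = tbot P t2.

Definition reduced (P : pic S) : Prop := forall t1 t2, ~ dipole P t1 t2.

Definition maximal (P : pic S) (t : nat) : Prop :=
  t < nT P /\ forall t', ~ tlt P t t'.

(** Isomorphism of (w, _)-pictures up to concatenation below by a
    transistor-free picture (i.e. a permutation [pi] of the bottom contacts
    of the frame); [sigma] is the bijection between transistors. *)
Definition map_src (sigma : nat -> nat) (s : contact) : contact :=
  match s with
  | (None, i) => (None, i)
  | (Some t, j) => (Some (sigma t), j)
  end.

Definition map_tgt (sigma pi : nat -> nat) (c : contact) : contact :=
  match c with
  | (Some t, k) => (Some (sigma t), k)
  | (None, i) => (None, pi i)
  end.

Definition pic_iso (P Q : pic S) (sigma pi : nat -> nat) : Prop :=
  nT P = nT Q /\
  (forall t, t < nT P -> sigma t < nT Q) /\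
  (forall t1 t2, t1 < nT P -> t2 < nT P -> sigma t1 = sigma t2 -> t1 = t2) /\
  (forall t', t' < nT Q -> exists t, t < nT P /\ sigma t = t') /\
  size (vbot P) = size (vbot Q) /\
  (forall i, i < size (vbot P) -> pi i < size (vbot Q)) /\
  (forall i1 i2, i1 < size (vbot P) -> i2 < size (vbot P) ->
     pi i1 = pi i2 -> i1 = i2) /\
  (forall i', i' < size (vbot Q) -> exists i, i < size (vbot P) /\ pi i = i') /\
  (forall t, t < nT P -> ttop Q (sigma t) = ttop P t /\ tbot Q (sigma t) = tbot P t) /\
  (forall s, valid_src P s -> wire Q (map_src sigma s) = map_tgt sigma pi (wire P s)).

(** Removing a (maximal) transistor T together with its bottom wires: the
    wires arriving at the top of T now end on the bottom of the frame
    (placed, say, to the right; the position is irrelevant up to the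
    equivalence above); transistors are renumbered by [bump]/[unbump]. *)
Definition remove_tr (P : pic S) (T : nat) : pic S :=
  let keep i := ~~ has (fun j => wire P (Some T, j) == (None, i))
                       (iota 0 (size (tbot P T))) in
  let kmask := [seq keep i | i <- iota 0 (size (vbot P))] in
  let m := count id kmask in
  {| nT := (nT P).-1;
     ttop := fun t => ttop P (bump T t);
     tbot := fun t => tbot P (bump T t);
     vbot := mask kmask (vbot P) ++ ttop P T;
     wire := fun s =>
       let s0 := match s with
                 | (None, i) => (None, i)
                 | (Some t, j) => (Some (bump T t), j)
                 end in
       match wire P s0 with
       | (Some t, k) => if t == T then (None, m + k) else (Some (unbump T t), k)
       | (None, i) => (None, count keep (iota 0 i))
       end |}.

(** Edges (1-cells) of K_b(P,w): reduced (w, _)-pictures with exactly one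
    (maximal) transistor marked white, up to equivalence. *)
Definition is_edge (E : pic S * nat) : Prop :=
  is_picture E.1 /\ reduced E.1 /\ maximal E.1 E.2.

Definition edge_equiv (E F : pic S * nat) : Prop :=
  exists sigma pi, pic_iso E.1 F.1 sigma pi /\ sigma E.2 = F.2.

(** Squares (2-cubes): reduced (w, _)-pictures with two distinct maximal
    transistors W1, W2 marked white.  Its four sides are obtained by keeping
    (as shaded) or deleting one of the white transistors. *)
Definition is_square (P : pic S) (W1 W2 : nat) : Prop :=
  is_picture P /\ reduced P /\ maximal P W1 /\ maximal P W2 /\ W1 <> W2.

(** Two edges are simple square equivalent if they are (equivalent to)
    opposite sides of a square: the side where W2 is kept (shaded) and the
    side where W2 is deleted, W1 being white in both.  (The other pair of
    opposite sides is covered by exchanging W1 and W2.) *)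
Definition sq_equiv (E F : pic S * nat) : Prop :=
  exists P W1 W2, is_square P W1 W2 /\
    ((edge_equiv E (P, W1) /\ edge_equiv F (remove_tr P W2, unbump W2 W1)) \/
     (edge_equiv F (P, W1) /\ edge_equiv E (remove_tr P W2, unbump W2 W1))).

End Pictures.

(* Main.v *)
Require Import Defs.
From Stdlib Require Import Relations.Relation_Operators.
From mathcomp Require Import all_boot.
From mathcomp Require Import zify.
Set Implicit Arguments. Unset Strict Implicit.

Definition rank (a : pred nat) i := count a (iota 0 i).
Definition sel (a : pred nat) n j := nth 0 [seq i <- iota 0 n | a i] j.

Lemma iota_split i n : i < n -> iota 0 n = iota 0 i ++ i :: iota i.+1 (n - i.+1).
Proof.
move=> lt; have -> : n = i + (n - i.+1).+1 by lia.
rewrite iotaD /= add0n; congr (_ ++ _ :: iota _ _); lia.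
Qed.

Lemma rank_lt (a : pred nat) i n : a i -> i < n -> rank a i < rank a n.
Proof.
move=> ai lt; rewrite /rank (iota_split lt) count_cat /= ai; lia.
Qed.

Lemma sel_rank (a : pred nat) i n : a i -> i < n -> sel a n (rank a i) = i.
Proof.
move=> ai lt; rewrite /sel (iota_split lt) filter_cat /= ai nth_cat size_filter.
by rewrite /rank ltnn subnn.
Qed.

Lemma sel_spec (a : pred nat) n j : j < rank a n ->
  a (sel a n j) /\ sel a n j < n /\ rank a (sel a n j) = j.
Proof.
move=> lt.
have sz : j < size [seq i <- iota 0 n | a i] by rewrite size_filter.
have mem := mem_nth 0 sz.
rewrite mem_filter mem_iota /= in mem; case/andP: mem => ax xn.
split; first exact ax. split; first exact xn.
have u : uniq [seq i <- iota 0 n | a i] by rewrite filter_uniq // iota_uniq.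
have h := sel_rank ax xn.
apply/eqP; rewrite -(nth_uniq 0 _ sz u); last by rewrite size_filter; apply: rank_lt.
by apply/eqP; exact h.
Qed.

Definition inv (f : nat -> nat) n y := find (fun x => f x == y) (iota 0 n).

Lemma inv_f f n x : (forall a b, a < n -> b < n -> f a = f b -> a = b) ->
  x < n -> inv f n (f x) = x.
Proof.
move=> inj lt.
have hs : has (fun z => f z == f x) (iota 0 n).
  by apply/hasP; exists x => //; rewrite mem_iota.
move: (hs); rewrite has_find size_iota => kl.
have := nth_find 0 hs; rewrite nth_iota // add0n => /eqP e.
by apply inj.
Qed.

Section Iso.
Variable S : Type.
Variable w : seq S.

Lemma iso_valid (P Q : pic S) sg pi s : pic_iso w P Q sg pi ->
  valid_src w P s -> valid_src w Q (map_src sg s).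
Proof.
case: s => [[t|] j] [_ [Hs [_ [_ [_ [_ [_ [_ [Htb _]]]]]]]]] //=.
case=> tl jl; split; first exact: Hs. by rewrite (Htb t tl).2.
Qed.

Lemma map_src_comp s1 s2 s : map_src s2 (map_src s1 s) = map_src (s2 \o s1) s.
Proof. by case: s => [[t|] j]. Qed.

Lemma map_tgt_comp s1 p1 s2 p2 c :
  map_tgt s2 p2 (map_tgt s1 p1 c) = map_tgt (s2 \o s1) (p2 \o p1) c.
Proof. by case: c => [[t|] j]. Qed.

Lemma iso_comp (P Q R' : pic S) s1 p1 s2 p2 : pic_iso w P Q s1 p1 ->
  pic_iso w Q R' s2 p2 -> pic_iso w P R' (s2 \o s1) (p2 \o p1).
Proof.
move=> H1 H2.
have V := iso_valid H1.
case: H1 => [n1 [b1 [i1 [su1 [v1 [pb1 [pi1 [ps1 [tb1 w1]]]]]]]]].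
case: H2 => [n2 [b2 [i2 [su2 [v2 [pb2 [pi2 [ps2 [tb2 w2]]]]]]]]].
split; first by rewrite n1.
split; first by move=> t lt /=; apply b2, b1.
split; first by move=> x y lx ly /= /i2 e; apply i1 => //; by apply: e; apply: b1.
split.
  move=> t' lt'; have [u [lu <-]] := su2 _ lt'.
  by have [t [lt <-]] := su1 _ lu; exists t.
split; first by rewrite v1.
split; first by move=> i li /=; apply pb2, pb1.
split; first by move=> x y lx ly /= /pi2 e; apply pi1 => //; by apply: e; apply: pb1.
split.
  move=> t' lt'; have [u [lu <-]] := ps2 _ lt'.
  by have [t [lt <-]] := ps1 _ lu; exists t.
split.
  move=> t lt /=; case: (tb2 _ (b1 _ lt)) => -> ->; exact: tb1.
move=> s vs; rewrite -map_src_comp w2; last exact: V.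
by rewrite w1 // map_tgt_comp.
Qed.

Lemma iso_inv R (P Q : pic S) sg pi : is_picture R w P -> pic_iso w P Q sg pi ->
  pic_iso w Q P (inv sg (nT P)) (inv pi (size (vbot P))).
Proof.
move=> [vt _] H; have V := iso_valid H; move: H.
move=> [n1 [b1 [i1 [su1 [v1 [pb1 [pi1 [ps1 [tb1 w1]]]]]]]]].
have ts t : t < nT P -> inv sg (nT P) (sg t) = t by apply: inv_f.
have ps i : i < size (vbot P) -> inv pi (size (vbot P)) (pi i) = i by apply: inv_f.
split; first by rewrite n1.
split; first by move=> t' /su1 [t [lt <-]]; rewrite ts.
split; first by move=> x y /su1 [a [la <-]] /su1 [b [lb <-]]; rewrite ts // ts // => ->.
split; first by move=> t lt; exists (sg t); rewrite ts //; split => //; apply b1.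
split; first by rewrite v1.
split; first by move=> t' /ps1 [t [lt <-]]; rewrite ps.
split; first by move=> x y /ps1 [a [la <-]] /ps1 [b [lb <-]]; rewrite ps // ps // => ->.
split; first by move=> t lt; exists (pi t); rewrite ps //; split => //; apply pb1.
split.
  move=> t' /su1 [t [lt <-]]; rewrite ts //; case: (tb1 _ lt) => -> -> //.
move=> s' vs'.
have [s0 [vs0 [e1 e2]]] : exists s0, valid_src w P s0 /\ s' = map_src sg s0 /\
   map_src (inv sg (nT P)) s' = s0.
  case: s' vs' => [[t'|] j] /=; last by move=> ji; exists (None, j).
  case=> /su1 [t [lt <-]] jl; exists (Some t, j); rewrite ts //.
  by split => //; split => //; case: (tb1 _ lt) => _ <-.
rewrite e2 e1 w1 //.
have := vt _ vs0; case: (wire P s0) => [[t|] k] /=.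
  by case=> lt _; rewrite ts.
by move=> lt; rewrite ps.
Qed.


Lemma memI x n : (x \in iota 0 n) = (x < n).
Proof. by rewrite mem_iota add0n. Qed.

Lemma bump_lt h t n : h < n -> t < n.-1 -> bump h t < n.
Proof. move=> ? ?; rewrite /bump; case: (leqP h t) => /= c; lia. Qed.

Lemma unbump_lt h x n : h < n -> x < n -> x != h -> unbump h x < n.-1.
Proof. move=> ? ? /eqP ?; rewrite /unbump; case: (ltnP h x) => /= c; lia. Qed.

Definition keepf (P : pic S) T i : bool :=
  ~~ has (fun j => wire P (Some T, j) == (None, i)) (iota 0 (size (tbot P T))).
Definition mcnt P T := rank (keepf P T) (size (vbot P)).
Definition sig' (sg : nat -> nat) T T' u := unbump T' (sg (bump T u)).
Definition pi' P Q T T' (pi : nat -> nat) j :=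
  if j < mcnt P T then rank (keepf Q T') (pi (sel (keepf P T) (size (vbot P)) j)) else j.
Definition src0 T (s : contact) : contact :=
  match s with (None, i) => (None, i) | (Some t, j) => (Some (bump T t), j) end.

Lemma rm_wire P T s : wire (remove_tr P T) s =
  match wire P (src0 T s) with
  | (Some t, k) => if t == T then (None, mcnt P T + k) else (Some (unbump T t), k)
  | (None, i) => (None, rank (keepf P T) i)
  end.
Proof. by rewrite /remove_tr /= count_map. Qed.

Lemma rm_size P T : size (vbot (remove_tr P T)) = mcnt P T + size (ttop P T).
Proof. by rewrite /remove_tr /= size_cat size_mask ?size_map ?size_iota // count_map. Qed.

Lemma iso_remove R (P Q : pic S) sg pi T : is_picture R w P ->
  pic_iso w P Q sg pi -> T < nT P ->
  pic_iso w (remove_tr P T) (remove_tr Q (sg T)) (sig' sg T (sg T)) (pi' P Q T (sg T) pi).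
Proof.
move=> [vt [inj _]] H lT; have V := iso_valid H; move: H.
move=> [n1 [b1 [i1 [su1 [v1 [pb1 [pi1 [ps1 [tb1 w1]]]]]]]]].
have lsT : sg T < nT Q by apply: b1.
have ee t : t < nT P -> (sg t == sg T) = (t == T).
  by move=> lt; apply/eqP/eqP => [e|->] //; apply: i1.
have nb t : bump T t != T by rewrite eq_sym neq_bump.
have kR i : i < size (vbot P) -> keepf Q (sg T) (pi i) = keepf P T i.
  move=> il; rewrite /keepf (tb1 T lT).2; congr (~~ _); apply: eq_in_has => j.
  rewrite memI => jl; rewrite (w1 (Some T, j)) /=; last by split.
  have := vt (Some T, j) (conj lT jl); case: (wire P (Some T, j)) => [[t|] k] //=.
  move=> kl; apply/eqP/eqP => [[e]|[->]] //; by rewrite (pi1 _ _ kl il e).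
have mE : mcnt Q (sg T) = mcnt P T.
  have pe : perm_eq (map pi (iota 0 (size (vbot P)))) (iota 0 (size (vbot Q))).
    apply: uniq_perm; last 1 first.
    - move=> x; rewrite memI; apply/mapP/idP => [[y]|xl].
        by rewrite memI => yl ->; apply: pb1.
      by have [y [yl <-]] := ps1 _ xl; exists y; rewrite ?memI.
    - rewrite map_inj_in_uniq ?iota_uniq // => x y; rewrite !memI => xl yl.
      exact: pi1.
    - exact: iota_uniq.
  rewrite /mcnt /rank -(permP pe) count_map; apply: eq_in_count => i.
  by rewrite memI => il /=; apply: kR.
split; first by rewrite /= n1.
split.
  move=> t /= lt; rewrite /sig' -n1; apply: unbump_lt => //; first by rewrite n1.
    by rewrite n1; apply: b1; apply: bump_lt.
  by rewrite ee ?nb //; apply: bump_lt.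
split.
  move=> t1 t2 /= l1 l2; rewrite /sig' => e.
  have e2 : sg (bump T t1) = sg (bump T t2).
    have := congr1 (bump (sg T)) e; rewrite !unbumpKcond !ee ?(negbTE (nb _)) //;
    by apply: bump_lt.
  have := i1 _ _ (bump_lt lT l1) (bump_lt lT l2) e2.
  by move=> e3; rewrite -(bumpK T t1) e3 bumpK.
split.
  move=> t' /= lt'.
  have ly : bump (sg T) t' < nT Q by apply: bump_lt => //; rewrite -n1.
  have [x [lx ex]] := su1 _ ly.
  have nx : x != T.
    by apply/eqP => ext; move: (neq_bump (sg T) t'); rewrite -ex ext eqxx.
  exists (unbump T x); split; first by apply: unbump_lt.
  rewrite /sig' unbumpK ?inE // ex bumpK //.
split; first by rewrite !rm_size mE (tb1 T lT).1.
split.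
  move=> j; rewrite !rm_size mE (tb1 T lT).1 /pi'; case: ifP => jl jb //.
  have [ka [sl rk]] := sel_spec jl.
  have := rank_lt (a := keepf Q (sg T)) (i := pi (sel (keepf P T) (size (vbot P)) j)) (n := size (vbot Q)).
  rewrite kR // ka => /(_ isT (pb1 _ sl)); rewrite -/(mcnt Q (sg T)) mE; lia.
split.
  move=> j1 j2; rewrite !rm_size /pi'.
  case: ifP => l1; case: ifP => l2 b1' b2' //.
  - have [ka1 [sl1 rk1]] := sel_spec l1; have [ka2 [sl2 rk2]] := sel_spec l2.
    move=> e; rewrite -rk1 -rk2; congr rank.
    apply: pi1 => //.
    rewrite -(sel_rank (a := keepf Q (sg T)) (n := size (vbot Q)) _ (pb1 _ sl1)); last by rewrite kR.
    rewrite e sel_rank // ?kR //; exact: pb1.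
  - have [ka1 [sl1 rk1]] := sel_spec l1.
    have := rank_lt (a := keepf Q (sg T)) (i := pi (sel (keepf P T) (size (vbot P)) j1)) (n := size (vbot Q)).
    rewrite kR // ka1 => /(_ isT (pb1 _ sl1)); rewrite -/(mcnt Q (sg T)) mE; move: l2 => /negbT; lia.
  - have [ka2 [sl2 rk2]] := sel_spec l2.
    have := rank_lt (a := keepf Q (sg T)) (i := pi (sel (keepf P T) (size (vbot P)) j2)) (n := size (vbot Q)).
    rewrite kR // ka2 => /(_ isT (pb1 _ sl2)); rewrite -/(mcnt Q (sg T)) mE; move: l1 => /negbT; lia.
split.
  move=> i'; rewrite !rm_size /pi' => li'.
  case: (ltnP i' (mcnt Q (sg T))) => c.
  - have [ka [sl rk]] := sel_spec c.
    have [x [lx ex]] := ps1 _ sl.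
    have kx : keepf P T x by rewrite -kR // ex.
    have rl := rank_lt kx lx.
    exists (rank (keepf P T) x); split; first by move: rl; rewrite -/(mcnt P T); lia.
    by rewrite -/(mcnt P T) rl sel_rank // ex rk.
  - exists i'; split; first by move: li'; rewrite mE (tb1 T lT).1.
    by rewrite -mE ltnNge c.
split.
  move=> t /= lt; rewrite /sig' unbumpK; first by apply: tb1; apply: bump_lt.
  by rewrite inE ee ?nb //; apply: bump_lt.
move=> s vs.
have [vs0 es] : valid_src w P (src0 T s) /\ src0 (sg T) (map_src (sig' sg T (sg T)) s) = map_src sg (src0 T s).
  case: s vs => [[t|] j] //= [lt jl]; split.
  - by split => //; apply: bump_lt.
  - by rewrite /sig' unbumpK // inE ee ?nb //; apply: bump_lt.
have hnk i : wire P (src0 T s) = (None, i) -> keepf P T i.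
  move=> e; apply/hasP => [[j]]; rewrite memI => jl /eqP e2.
  have := inj (Some T, j) _ (conj lT jl) vs0; rewrite e2 e => /(_ erefl).
  case: s {vs vs0 es e} => [[t|] j0] //= [e3].
  by move: (nb t); rewrite -e3 eqxx.
rewrite !rm_wire es w1 //.
have := vt _ vs0; have := hnk; case: (wire P (src0 T s)) => [[t|] k] /= hk.
  case=> lt kl; rewrite ee //; case: eqP => [_|ne] /=.
    by rewrite /pi' ltnNge leq_addr /= mE.
  by rewrite /sig' unbumpK // inE; apply/eqP.
move=> kl; have kk := hk _ erefl.
by rewrite /pi' -/(mcnt P T) rank_lt // sel_rank.
Qed.

End Iso.

Lemma iso_id S w (P : pic S) : pic_iso w P P id id.
Proof.
split => //; split => //; split => //; split; first by move=> t lt; exists t.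
split => //; split => //; split => //; split; first by move=> t lt; exists t.
split => //.
by move=> [[t|] j] _; case: (wire P _) => [[?|] ?].
Qed.

Lemma key S R w (E F : pic S * nat) P W1 W2 :
  is_edge R w E -> is_square R w P W1 W2 ->
  edge_equiv w E (P, W1) -> edge_equiv w F (remove_tr P W2, unbump W2 W1) ->
  exists T, maximal E.1 T /\ T <> E.2 /\
    edge_equiv w F (remove_tr E.1 T, unbump T E.2).
Proof.
move=> [pE [_ mE]] [pP [_ [mW1 [mW2 neq]]]] [s1 [p1 [H1 /= e1]]] [s2 [p2 [H2 /= e2]]].
have Hi := iso_inv pE H1.
have lW2 := mW2.1.
have Hr := iso_remove pP Hi lW2.
have Hc := iso_comp H2 Hr.
have H1' := H1.
move: H1' => [n1 [b1 [i1 [su1 [v1 [pb1 [pi1 [ps1 [tb1 w1]]]]]]]]].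
set tau := inv s1 (nT E.1) in Hi Hr Hc *.
have ts t : t < nT E.1 -> tau (s1 t) = t by apply: inv_f.
have st t' : t' < nT P -> s1 (tau t') = t' /\ tau t' < nT E.1.
  by move=> /su1 [x [lx <-]]; rewrite ts.
have lE := mE.1.
have tW1 : tau W1 = E.2 by rewrite -e1 ts.
have [sW2 lt2] := st _ lW2.
exists (tau W2); split.
  split => // t' [_ [lt' [j [k [jl e]]]]].
  apply: (mW2.2 (s1 t')); split => //; split; first by apply: b1.
  exists j, k; split; first by rewrite -sW2 (tb1 _ lt2).2.
  have := w1 (Some (tau W2), j); rewrite /= sW2 => ->; last by split.
  by rewrite e.
split.
  by move=> e; apply: neq; rewrite -sW2 e -tW1 (st _ mW1.1).1.
eexists; eexists; split; first exact: Hc.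
rewrite /= e2 /sig' unbumpKcond.
have -> : (W1 == W2) = false by apply/eqP.
by rewrite add0n tW1.
Qed.

Theorem lemma4p1 (S : Type) (R : seq S -> seq S -> Prop)
  (HR_nonempty : forall u v, R u v -> u <> [::] /\ v <> [::])
  (HR_nontriv : forall u, ~ R u u)
  (w : seq S) (Hw : w <> [::])
  (E' E'' : pic S * nat)
  (HE' : is_edge R w E') (HE'' : is_edge R w E'') :
  sq_equiv R w E' E'' <->
  ((exists T, maximal E'.1 T /\ T <> E'.2 /\
      edge_equiv w E'' (remove_tr E'.1 T, unbump T E'.2)) \/
   (exists T, maximal E''.1 T /\ T <> E''.2 /\
      edge_equiv w E' (remove_tr E''.1 T, unbump T E''.2))).
Proof.
split.
  case=> P [W1 [W2 [sq [[h1 h2]|[h1 h2]]]]].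
    by left; apply: (key HE' sq h1 h2).
  by right; apply: (key HE'' sq h1 h2).
case=> [[T [mT [ne eq]]]|[T [mT [ne eq]]]].
  case: HE' => [pE [rE mE]].
  exists E'.1, E'.2, T; split; first by split => //; split => //; split => //; split => // e; apply: ne.
  left; split => //; exists id, id; split => //; exact: iso_id.
case: HE'' => [pE [rE mE]].
exists E''.1, E''.2, T; split; first by split => //; split => //; split => //; split => // e; apply: ne.
right; split => //; exists id, id; split => //; exact: iso_id.
Qed.
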